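(* For all $k,\ell\in\mathbb N$ the following hold in the $q$-shuffle algebra $\mathbb V$: $$[W_{-k},W_{-\ell}]=0,\qquad [W_{k+1},W_{\ell+1}]=0,$$ $$[W_{-k},W_{\ell+1}]+[W_{k+1},W_{-\ell}]=0,$$ $$[W_{-k},G_{\ell+1}]+[G_{k+1},W_{-\ell}]=0,$$ $$[W_{-k},\tilde G_{\ell+1}]+[\tilde G_{k+1},W_{-\ell}]=0,$$ $$[W_{k+1},G_{\ell+1}]+[G_{k+1},W_{\ell+1}]=0,$$ $$[W_{k+1},\tilde G_{\ell+1}]+[\tilde G_{k+1},W_{\ell+1}]=0,$$ $$[G_{k+1},G_{\ell+1}]=0,\qquad [\tilde G_{k+1},\tilde G_{\ell+1}]=0,$$ $$[\tilde G_{k+1},G_{\ell+1}]+[G_{k+1},\tilde G_{\ell+1}]=0.$$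
   Context: Let $\mathbb F$ be a field and let $q\in\mathbb F$ be nonzero and not a root of unity. Let $\mathbb V$ be the free associative $\mathbb F$-algebra on noncommuting $x,y$, with basis the words (including $1$). Juxtaposition denotes concatenation. Set $\langle x,x\rangle=\langle y,y\rangle=2$ and $\langle x,y\rangle=\langle y,x\rangle=-2$. The $q$-shuffle product $\star$ is the bilinear product determined as follows: - $1\star v=v\star 1=v$; - for nontrivial words $u=u_1\cdots u_r$ and $v=v_1\cdots v_s$, $$u\star v=u_1((u_2\cdots u_r)\star v)+v_1(u\star(v_2\cdots v_s))q^{\langle u_1,v_1\rangle+\cdots+\langle u_r,v_1\rangle}.$$ This makes $\mathbb V$ an associative algebra, the $q$-shuffle algebra. Write $[a,b]=a\star b-b\star a$. For $k\in\mathbb N$: - $W_{-k}=xyx\cdots x$ is the alternating word of length $2k+1$ beginning and ending with $x$; - $W_{k+1}=yxy\cdots y$ is the alternating word of length $2k+1$ beginning and ending with $y$; - $G_k=yxyx\cdots yx$ is the word of length $2k$; - $\tilde G_k=xyxy\cdots xy$ is the word of length $2k$; - $G_0=\tilde G_0=1$. *)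

(* Defs.v *)
From HB Require Import structures.
From mathcomp Require Import all_boot all_order all_algebra.
Set Implicit Arguments. Unset Strict Implicit. Unset Printing Implicit Defensive.
Import Order.TTheory GRing.Theory Num.Theory.
Local Open Scope ring_scope.

Inductive letter := lx | ly.
Definition letter_eqb (a b : letter) : bool :=
  match a, b with lx, lx | ly, ly => true | _, _ => false end.
Lemma letter_eqP : Equality.axiom letter_eqb.
Proof. by case; case; constructor. Qed.
HB.instance Definition _ := hasDecEq.Build letter letter_eqP.

Definition word := seq letter.

(* An element of V = free algebra with basis the words, given by its
   coefficient function (the elements arising below have finite support). *)
Definition vec (F : fieldType) := word -> F.
Definition vzero (F : fieldType) : vec F := fun _ => 0.
Definition vadd (F : fieldType) (a b : vec F) : vec F := fun w => a w + b w.
Definition wvec (F : fieldType) (v : word) : vec F := fun w => (w == v)%:R.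

Definition pairing (a b : letter) : int := if a == b then 2%Z else (-2)%Z.

(* q-shuffle product u * v of two words, as an element of V:
   1*v = v, u*1 = u,
   u*v = u1 ((u2..ur)*v) + v1 (u*(v2..vs)) q^{<u1,v1>+...+<ur,v1>}. *)
Fixpoint qshuffle (F : fieldType) (q : F) (u : word) : word -> vec F :=
  match u with
  | [::] => fun v => wvec F v
  | u1 :: u' =>
      fix sh' (v : word) : vec F :=
        match v with
        | [::] => wvec F (u1 :: u')
        | v1 :: v' => fun w =>
            match w with
            | [::] => 0
            | a :: w' =>
                (a == u1)%:R * qshuffle q u' (v1 :: v') w'
                + (a == v1)%:R * sh' v' w'
                  * q ^ (\sum_(c <- u1 :: u') pairing c v1)
            end
        end
  end.

Definition qcomm (F : fieldType) (q : F) (u v : word) : vec F :=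
  fun w => qshuffle q u v w - qshuffle q v u w.

(* W_{-k} = xyx...x (length 2k+1) *)
Definition Wneg (k : nat) : word := lx :: flatten (nseq k [:: ly; lx]).
(* W_{k+1} = yxy...y (length 2k+1) *)
Definition Wpos (k : nat) : word := ly :: flatten (nseq k [:: lx; ly]).
Definition Gw (k : nat) : word := flatten (nseq k [:: ly; lx]).
Definition Gtw (k : nat) : word := flatten (nseq k [:: lx; ly]).

Definition not_root_of_unity (F : fieldType) (q : F) : Prop :=
  forall n : nat, (0 < n)%N -> q ^+ n != 1.

(* Main.v *)
Require Import Defs.
From HB Require Import structures.
From mathcomp Require Import all_boot all_order all_algebra.
From mathcomp Require Import ring.
Import GRing.Theory.
Set Implicit Arguments. Unset Strict Implicit. Unset Printing Implicit Defensive.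
Local Open Scope ring_scope.

Section Aux.
End Aux.

Definition dl (F : fieldType) (q : F) (a : letter) (u v w : word) : F :=
  if u is u1 :: u' then (a == u1)%:R * qshuffle q u' v w else 0.
Definition dr (F : fieldType) (q : F) (a : letter) (u v w : word) : F :=
  if v is v1 :: v' then (a == v1)%:R * q ^ (\sum_(c <- u) pairing c a) * qshuffle q u v' w else 0.

Lemma sh_nil_l (F : fieldType) (q : F) v w : qshuffle q [::] v w = wvec F v w.
Proof. by []. Qed.
Lemma sh_nil_r (F : fieldType) (q : F) u w : qshuffle q u [::] w = wvec F u w.
Proof. by case: u. Qed.

Lemma shD (F : fieldType) (q : F) a u v w :
  qshuffle q u v (a :: w) = dl q a u v w + dr q a u v w.
Proof.
case: u => [|u1 u']; case: v => [|v1 v'].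
- by rewrite /dl /dr /= /wvec /= addr0.
- by rewrite /dl /dr /= /wvec big_nil expr0z eqseq_cons add0r mulr1 -natrM mulnb.
- by rewrite /dl /dr /= /wvec sh_nil_r addr0 eqseq_cons -natrM mulnb.
- rewrite /dl /dr /=. congr (_ + _).
  case: (a =P v1) => [->|]; last by rewrite !mul0r.
  by rewrite mulrAC.
Qed.

Lemma sh_w0 (F : fieldType) (q : F) u v :
  qshuffle q u v [::] = ((u == [::]) && (v == [::]))%:R.
Proof.
by case: u => [|u1 u']; case: v => [|v1 v'] //=; rewrite /wvec //= sh_nil_r.
Qed.

Definition swapl (a : letter) := if a is lx then ly else lx.
Definition swapw (w : word) : word := map swapl w.

Lemma swapl_eq a b : (swapl a == swapl b) = (a == b).
Proof. by case: a; case: b. Qed.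
Lemma pairing_swap a b : pairing (swapl a) (swapl b) = pairing a b.
Proof. by case: a; case: b. Qed.

Arguments qshuffle : simpl never.

Lemma sh_swap (F : fieldType) (q : F) u v w :
  qshuffle q (swapw u) (swapw v) (swapw w) = qshuffle q u v w.
Proof.
elim: w u v => [|a w IH] u v.
  by rewrite !sh_w0; case: u; case: v.
rewrite /= !shD; case: u => [|u1 u']; case: v => [|v1 v'];
  rewrite /dl /dr /= ?swapl_eq ?IH //.
- by rewrite !big_nil -(IH [::] v').
- by rewrite -(IH u' [::]).
- rewrite -(IH u' (v1::v')) -(IH (u1::u') v').
  congr (_ + _ * _).
  rewrite -[swapl u1 :: swapw u']/(swapw (u1::u')) big_map.
  by under eq_bigr do rewrite pairing_swap.
Qed.

Lemma swapwK w : swapw (swapw w) = w.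
Proof. by elim: w => [|a w IH] //=; rewrite IH; case: a. Qed.
Lemma swap_Gw k : swapw (Gw k) = Gtw k.
Proof. by elim: k => [|k IH] //=; rewrite IH. Qed.
Lemma swap_Gtw k : swapw (Gtw k) = Gw k.
Proof. by elim: k => [|k IH] //=; rewrite IH. Qed.
Lemma swap_Wneg k : swapw (Wneg k) = Wpos k.
Proof. by rewrite /= -[flatten _]/(Gw k) swap_Gw. Qed.
Lemma swap_Wpos k : swapw (Wpos k) = Wneg k.
Proof. by rewrite /= -[flatten _]/(Gtw k) swap_Gtw. Qed.

Lemma wt_G k a : \sum_(c <- Gw k) pairing c a = 0.
Proof.
elim: k => [|k IH]; first by rewrite big_nil.
by rewrite -[Gw k.+1]/(ly :: lx :: Gw k) !big_cons IH addr0; clear IH; case: a.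
Qed.
Lemma wt_H k a : \sum_(c <- Gtw k) pairing c a = 0.
Proof.
elim: k => [|k IH]; first by rewrite big_nil.
by rewrite -[Gtw k.+1]/(lx :: ly :: Gtw k) !big_cons IH addr0; clear IH; case: a.
Qed.
Lemma wt_A k a : \sum_(c <- Wneg k) pairing c a = pairing lx a.
Proof. by rewrite -[Wneg k]/(lx :: Gw k) big_cons wt_G addr0. Qed.
Lemma wt_B k a : \sum_(c <- Wpos k) pairing c a = pairing ly a.
Proof. by rewrite -[Wpos k]/(ly :: Gtw k) big_cons wt_H addr0. Qed.

Section DL.
Variables (F : fieldType) (q : F).
Lemma dlA a k v w : dl q a (Wneg k) v w = (a == lx)%:R * qshuffle q (Gw k) v w.
Proof. by []. Qed.
Lemma dlB a k v w : dl q a (Wpos k) v w = (a == ly)%:R * qshuffle q (Gtw k) v w.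
Proof. by []. Qed.
Lemma dlG a k v w : dl q a (Gw k.+1) v w = (a == ly)%:R * qshuffle q (Wneg k) v w.
Proof. by []. Qed.
Lemma dlH a k v w : dl q a (Gtw k.+1) v w = (a == lx)%:R * qshuffle q (Wpos k) v w.
Proof. by []. Qed.
Lemma dlG0 a v w : dl q a (Gw 0) v w = 0.
Proof. by []. Qed.
Lemma dlH0 a v w : dl q a (Gtw 0) v w = 0.
Proof. by []. Qed.
Lemma drA a u k w : dr q a u (Wneg k) w =
  (a == lx)%:R * q ^ (\sum_(c <- u) pairing c a) * qshuffle q u (Gw k) w.
Proof. by []. Qed.
Lemma drB a u k w : dr q a u (Wpos k) w =
  (a == ly)%:R * q ^ (\sum_(c <- u) pairing c a) * qshuffle q u (Gtw k) w.
Proof. by []. Qed.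
Lemma drG a u k w : dr q a u (Gw k.+1) w =
  (a == ly)%:R * q ^ (\sum_(c <- u) pairing c a) * qshuffle q u (Wneg k) w.
Proof. by []. Qed.
Lemma drH a u k w : dr q a u (Gtw k.+1) w =
  (a == lx)%:R * q ^ (\sum_(c <- u) pairing c a) * qshuffle q u (Wpos k) w.
Proof. by []. Qed.
Lemma drG0 a u w : dr q a u (Gw 0) w = 0.
Proof. by []. Qed.
Lemma drH0 a u w : dr q a u (Gtw 0) w = 0.
Proof. by []. Qed.
Lemma shG0l v w : qshuffle q (Gw 0) v w = wvec F v w.
Proof. by []. Qed.
Lemma shG0r v w : qshuffle q v (Gw 0) w = wvec F v w.
Proof. exact: sh_nil_r. Qed.
Lemma shH0l v w : qshuffle q (Gtw 0) v w = wvec F v w.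
Proof. by []. Qed.
Lemma shH0r v w : qshuffle q v (Gtw 0) w = wvec F v w.
Proof. exact: sh_nil_r. Qed.
Lemma Gtw0 : Gtw 0 = Gw 0. Proof. by []. Qed.
Lemma exx : ((lx == lx)%:R : F) = 1. Proof. by []. Qed.
Lemma eyy : ((ly == ly)%:R : F) = 1. Proof. by []. Qed.
Lemma exy : ((lx == ly)%:R : F) = 0. Proof. by []. Qed.
Lemma eyx : ((ly == lx)%:R : F) = 0. Proof. by []. Qed.
Lemma pxx : q ^ (pairing lx lx) = q ^+ 2. Proof. by []. Qed.
Lemma pyy : q ^ (pairing ly ly) = q ^+ 2. Proof. by []. Qed.
Lemma pxy : q ^ (pairing lx ly) = (q ^+ 2)^-1. Proof. by []. Qed.
Lemma pyx : q ^ (pairing ly lx) = (q ^+ 2)^-1. Proof. by []. Qed.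
Lemma p0 : q ^ (0 : int) = 1. Proof. by []. Qed.
End DL.

Section Rel.
Variables (F : fieldType) (q : F).
Local Notation S := (qshuffle q).
Definition cm u v w := S u v w - S v u w.
Definition qc c u v w := S u v w - c * S v u w.
Definition qi : F := (q ^+ 2)^-1.
Definition RT1 k l w := cm (Wneg k) (Wneg l) w.
Definition RT4 k l w := cm (Wneg k) (Gw l.+1) w + cm (Gw k.+1) (Wneg l) w.
Definition RT8 k l w := cm (Gw k.+1) (Gw l.+1) w.
Definition REAG k l w := qc (q ^+ 2) (Gw k) (Wneg l) w - qc (q ^+ 2) (Gw l) (Wneg k) w.
Definition RT3 k l w := cm (Wneg k) (Wpos l) w + cm (Wpos k) (Wneg l) w.
Definition RT5 k l w := cm (Wneg k) (Gtw l.+1) w + cm (Gtw k.+1) (Wneg l) w.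
Definition RT5p k l w := cm (Wpos k) (Gw l.+1) w + cm (Gw k.+1) (Wpos l) w.
Definition RT10 k l w := cm (Gtw k.+1) (Gw l.+1) w + cm (Gw k.+1) (Gtw l.+1) w.
Definition REGB k l w := qc qi (Gw k) (Wpos l) w - qc qi (Gw l) (Wpos k) w.
Definition REGBp k l w := qc qi (Gtw k) (Wneg l) w - qc qi (Gtw l) (Wneg k) w.
Definition RL k l w := cm (Gw k.+1) (Gtw l) w - cm (Gw k) (Gtw l.+1) w
  - (q ^+ 2 - 1) * (S (Wneg k) (Wpos l) w - S (Wneg l) (Wpos k) w).
Definition cmAB k l w := if k is k'.+1 then cm (Wneg k') (Wpos l) w else 0.
Definition RY k l w := cmAB k l w - cmAB l k w + qc qi (Gw k) (Gtw l) w - qc qi (Gw l) (Gtw k) w.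

Lemma cmAB0 l w : cmAB 0 l w = 0. Proof. by []. Qed.
Lemma cmABS k l w : cmAB k.+1 l w = cm (Wneg k) (Wpos l) w. Proof. by []. Qed.

Lemma RT5p_swap k l w : RT5p k l w = RT5 k l (swapw w).
Proof.
rewrite /RT5p /RT5 /cm -!(sh_swap q _ _ w).
by rewrite ?swap_Wpos ?swap_Wneg ?swap_Gw ?swap_Gtw.
Qed.
Lemma REGBp_swap k l w : REGBp k l w = REGB k l (swapw w).
Proof.
rewrite /REGBp /REGB /qc -!(sh_swap q _ _ w).
by rewrite ?swap_Wpos ?swap_Wneg ?swap_Gw ?swap_Gtw.
Qed.

Definition P w :=
  (forall k l, RT1 k l w = 0) /\ (forall k l, RT4 k l w = 0) /\
  (forall k l, RT8 k l w = 0) /\ (forall k l, REAG k l w = 0) /\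
  (forall k l, RT3 k l w = 0) /\ (forall k l, RT5 k l w = 0) /\
  (forall k l, RT10 k l w = 0) /\ (forall k l, REGB k l w = 0) /\
  (forall k l, RL k l w = 0) /\ (forall k l, RY k l w = 0).

Lemma cl0 (G : F) : G = 0 -> G = 0. Proof. by []. Qed.
Lemma cl1 (c1 E1 G : F) : E1 = 0 -> G = c1 * E1 -> G = 0.
Proof. by move=> -> ->; rewrite mulr0. Qed.
Lemma cl2 (c1 c2 E1 E2 G : F) : E1 = 0 -> E2 = 0 -> G = c1 * E1 + c2 * E2 -> G = 0.
Proof. by move=> -> -> ->; rewrite !mulr0 addr0. Qed.
Lemma cl3 (c1 c2 c3 E1 E2 E3 G : F) : E1 = 0 -> E2 = 0 -> E3 = 0 ->
  G = c1 * E1 + c2 * E2 + c3 * E3 -> G = 0.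
Proof. by move=> -> -> -> ->; rewrite !mulr0 !addr0. Qed.

Lemma P_nil : P [::].
Proof.
repeat split; move=> k l;
  rewrite /RT1 /RT4 /RT8 /REAG /RT3 /RT5 /RT10 /REGB /RL /RY /cm /qc;
  try (case: k => [|k]); try (case: l => [|l]);
  rewrite ?cmAB0 ?cmABS /cm !sh_w0 /= ?andbF; ring.
Qed.
End Rel.

Ltac dsimp := rewrite /RT1 /RT4 /RT8 /REAG /RT3 /RT5 /RT5p /RT10 /REGB /REGBp /RL /RY
  ?cmAB0 ?cmABS /cm /qc /qi;
  rewrite !shD ?dlA ?dlB ?dlG ?dlH ?dlG0 ?dlH0 ?drA ?drB ?drG ?drH ?drG0 ?drH0
   ?wt_A ?wt_B ?wt_G ?wt_H ?exx ?eyy ?exy ?eyx ?pxx ?pyy ?pxy ?pyx ?p0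
   ?shG0l ?shG0r ?shH0l ?shH0r ?Gtw0.

Ltac fin := dsimp; field; try by rewrite expf_neq0.

Section Step.
Variables (F : fieldType) (q : F).
Hypothesis hq : q != 0.

Lemma step a w : P q w -> P q (swapw w) -> P q (a :: w).
Proof.
case=> [i1 [i4 [i8 [iE [i3 [i5 [i10 [iG [iL iY]]]]]]]]].
case=> [_ [_ [_ [_ [_ [j5 [_ [jG [_ _]]]]]]]]].
have j5' k l : RT5p q k l w = 0 by rewrite RT5p_swap j5.
have jG' k l : REGBp q k l w = 0 by rewrite REGBp_swap jG.
repeat split; move=> k l; case: a.
- by apply: (@cl1 _ 1 _ _ (iE k l)); fin.
- by apply: cl0; fin.
- case: k => [|k]; case: l => [|l].
  + by apply: cl0; fin.
  + by apply: (@cl1 _ 1 _ _ (i8 0 l)); fin.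
  + by apply: (@cl1 _ 1 _ _ (i8 k 0)); fin.
  + by apply: (@cl2 _ 1 1 _ _ _ (i8 k l.+1) (i8 k.+1 l)); fin.
- by apply: (@cl1 _ (1 + (q ^+ 2)^-1) _ _ (i1 k l)); fin.
- by apply: cl0; fin.
- by apply: (@cl1 _ 1 _ _ (i4 k l)); fin.
- case: k => [|k]; case: l => [|l].
  + by apply: cl0; fin.
  + by apply: cl0; fin.
  + by apply: cl0; fin.
  + by apply: (@cl1 _ (1 + q ^+ 2) _ _ (i8 k l)); fin.
- case: k => [|k]; case: l => [|l].
  + by apply: cl0; fin.
  + by apply: (@cl1 _ 1 _ _ (i1 0 l)); fin.
  + by apply: (@cl1 _ 1 _ _ (i1 k 0)); fin.
  + by apply: (@cl2 _ 1 1 _ _ _ (i1 k l.+1) (i1 k.+1 l)); fin.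
- by apply: (@cl1 _ 1 _ _ (iG k l)); fin.
- by apply: (@cl1 _ 1 _ _ (jG' k l)); fin.
- case: l => [|l].
  + by apply: (@cl2 _ 1 (-1) _ _ _ (i3 k 0) (iL k 0)); fin.
  + by apply: (@cl3 _ 1 (-1) 1 _ _ _ _ (i3 k l.+1) (iL k l.+1) (i10 k l)); fin.
- by apply: cl0; fin.
- by apply: (@cl1 _ 1 _ _ (j5' k l)); fin.
- by apply: (@cl1 _ 1 _ _ (i5 k l)); fin.
- by case: k => [|k]; case: l => [|l]; apply: cl0; fin.
- case: k => [|k]; case: l => [|l].
  + by apply: (@cl1 _ 1 _ _ (iY 0 0)); fin.
  + by apply: (@cl1 _ 1 _ _ (iY 0 l.+1)); fin.
  + by apply: (@cl1 _ 1 _ _ (iY k.+1 0)); fin.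
  + by apply: (@cl1 _ 1 _ _ (iY k.+1 l.+1)); fin.
- case: k => [|k]; case: l => [|l].
  + by apply: (@cl1 _ (- q ^+ 2) _ _ (iG 0 0)); fin.
  + by apply: (@cl2 _ 1 (- q ^+ 2) _ _ _ (j5' 0 l) (iG 0 l.+1)); fin.
  + by apply: (@cl1 _ (- q ^+ 2) _ _ (iG k.+1 0)); fin.
  + by apply: (@cl2 _ 1 (- q ^+ 2) _ _ _ (j5' k.+1 l) (iG k.+1 l.+1)); fin.
- case: k => [|k]; case: l => [|l].
  + by apply: (@cl1 _ 1 _ _ (jG' 0 0)); fin.
  + by apply: (@cl1 _ 1 _ _ (jG' 0 l.+1)); fin.
  + by apply: (@cl2 _ 1 (-1) _ _ _ (jG' k.+1 0) (i5 k 0)); fin.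
  + by apply: (@cl2 _ 1 (-1) _ _ _ (jG' k.+1 l.+1) (i5 k l.+1)); fin.
- case: k => [|k]; case: l => [|l].
  + by apply: cl0; fin.
  + by apply: (@cl1 _ 1 _ _ (iG 0 l)); fin.
  + by apply: (@cl1 _ 1 _ _ (iG k 0)); fin.
  + by apply: (@cl2 _ 1 1 _ _ _ (iG k l.+1) (iG k.+1 l)); fin.
- case: k => [|k]; case: l => [|l].
  + by apply: cl0; fin.
  + by apply: cl0; fin.
  + by apply: cl0; fin.
  + by apply: (@cl1 _ (1 + (q ^+ 2)^-1) _ _ (i5 k l)); fin.
Qed.
End Step.

Lemma allP (F : fieldType) (q : F) (hq : q != 0) w : P q w.
Proof.
suff: P q w /\ P q (swapw w) by case.
elim: w => [|a w [IH1 IH2]]; first by split; exact: P_nil.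
split; first exact: step.
apply: step => //; by rewrite swapwK.
Qed.

Theorem proposition5p10 (F : fieldType) (q : F)
  (hq0 : q != 0) (hq : not_root_of_unity q) (k l : nat) :
  qcomm q (Wneg k) (Wneg l) =1 vzero F /\
      qcomm q (Wpos k) (Wpos l) =1 vzero F /\
      vadd (qcomm q (Wneg k) (Wpos l)) (qcomm q (Wpos k) (Wneg l)) =1 vzero F /\
      vadd (qcomm q (Wneg k) (Gw l.+1)) (qcomm q (Gw k.+1) (Wneg l)) =1 vzero F /\
      vadd (qcomm q (Wneg k) (Gtw l.+1)) (qcomm q (Gtw k.+1) (Wneg l)) =1 vzero F /\
      vadd (qcomm q (Wpos k) (Gw l.+1)) (qcomm q (Gw k.+1) (Wpos l)) =1 vzero F /\
      vadd (qcomm q (Wpos k) (Gtw l.+1)) (qcomm q (Gtw k.+1) (Wpos l)) =1 vzero F /\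
      qcomm q (Gw k.+1) (Gw l.+1) =1 vzero F /\
      qcomm q (Gtw k.+1) (Gtw l.+1) =1 vzero F /\
      vadd (qcomm q (Gtw k.+1) (Gw l.+1)) (qcomm q (Gw k.+1) (Gtw l.+1)) =1 vzero F.
Proof.
have H : forall w, P q w := allP hq0.
have Hs : forall w, P q (swapw w) := fun w => allP hq0 (swapw w).
repeat split; move=> w; rewrite /qcomm /vadd /vzero;
  case: (H w) => [i1 [i4 [i8 [iE [i3 [i5 [i10 [iG [iL iY]]]]]]]]];
  case: (Hs w) => [j1 [j4 [j8 [jE [j3 [j5 [j10 [jG [jL jY]]]]]]]]].
- exact: (i1 k l).
- rewrite -!(sh_swap q _ _ w) !swap_Wpos; exact: (j1 k l).
- exact: (i3 k l).
- exact: (i4 k l).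
- exact: (i5 k l).
- have := RT5p_swap q k l w; rewrite (j5 k l); by [].
- rewrite -!(sh_swap q _ _ w) !swap_Wpos !swap_Gtw; exact: (j4 k l).
- exact: (i8 k l).
- rewrite -!(sh_swap q _ _ w) !swap_Gtw; exact: (j8 k l).
- exact: (i10 k l).
Qed.
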